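(* Let $S$ be a semigroup and $p$ a strongly productive ultrafilter on $S$. If $p$ is multiplicatively isomorphic to an ordered union ultrafilter, then $p$ is sparse. In particular every ordered union ultrafilter is sparse.
   Context: For a sequence $\vec{x}=(x_n)_{n\in\omega}$ in $S$, $\mathrm{FP}(\vec{x})$ is the set of products $\prod_{i\in a}x_i$ (increasing order of indices), $a$ finite nonempty subset of $\omega$; $p$ is strongly productive if every $A\in p$ contains some $\mathrm{FP}(\vec{x})\in p$. $\mathbb{F}$ is the partial semigroup of finite nonempty subsets of $\omega$ where $ab$ is defined, and equals $a\cup b$, iff $\max a<\min b$; an ordered union ultrafilter is a strongly productive ultrafilter on $\mathbb{F}$ (every member contains $\mathrm{FP}(\vec{b})$, belonging to the ultrafilter, for some sequence $\vec{b}$ in $\mathbb{F}$ with $\max b_i<\min b_{i+1}$). $p$ is multiplicatively isomorphic to an ordered union ultrafilter if there is a sequence $\vec{x}$ in $S$ such that $f:\mathbb{F}\to\mathrm{FP}(\vec{x})$, $f(a)=\prod_{i\in a}x_i$, is injective and $\{f^{-1}[A]:A\in p\}$ is an ordered union ultrafilter. A strongly productive ultrafilter $p$ is sparse if for every $A\in p$ there are a sequence $\vec{x}=(x_n)_{n\in\omega}$ in $S$ and a subsequence $\vec{y}=(x_{k_n})_{n\in\omega}$ ($k_0<k_1<\cdots$) such that $\mathrm{FP}(\vec{y})\in p$, $\mathrm{FP}(\vec{x})\subseteq A$, and $\{k_n:n\in\omega\}$ is coinfinite in $\omega$. *)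

(* Defs.v *)
From Stdlib Require Import List Arith.
Import ListNotations.

(* A finite nonempty subset of omega, encoded as its strictly increasing
   (nonempty) enumeration. *)
Fixpoint incr (l : list nat) : bool :=
  match l with
  | [] => true
  | a :: t => match t with
              | [] => true
              | b :: _ => Nat.ltb a b && incr t
              end
  end.

Definition isFin (l : list nat) : bool :=
  match l with [] => false | _ => incr l end.

Definition FinNE : Type := { l : list nat | isFin l = true }.

Definition fmin (a : FinNE) : nat := hd 0 (proj1_sig a).
Definition fmax (a : FinNE) : nat := last (proj1_sig a) 0.

Definition ultrafilter {X : Type} (p : (X -> Prop) -> Prop) : Prop :=
  p (fun _ => True) /\
  ~ p (fun _ => False) /\
  (forall A B : X -> Prop, p A -> (forall x, A x -> B x) -> p B) /\
  (forall A B : X -> Prop, p A -> p B -> p (fun x => A x /\ B x)) /\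
  (forall A : X -> Prop, p A \/ p (fun x => ~ A x)).

Definition subset {X : Type} (A B : X -> Prop) : Prop := forall x, A x -> B x.

Section Semi.
Context {S : Type} (op : S -> S -> S).

Definition prodList (x : nat -> S) (l : list nat) : S :=
  match l with
  | [] => x 0 (* never used: elements of FinNE are nonempty *)
  | i0 :: t => fold_left (fun acc j => op acc (x j)) t (x i0)
  end.

Definition prodF (x : nat -> S) (a : FinNE) : S := prodList x (proj1_sig a).

Definition FP (x : nat -> S) : S -> Prop := fun s => exists a : FinNE, s = prodF x a.

Definition strongly_productive (p : (S -> Prop) -> Prop) : Prop :=
  ultrafilter p /\
  forall A, p A -> exists x : nat -> S, p (FP x) /\ subset (FP x) A.

Definition sparse (p : (S -> Prop) -> Prop) : Prop :=
  forall A, p A ->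
    exists (x : nat -> S) (k : nat -> nat),
      (forall n, k n < k (Datatypes.S n)) /\
      p (FP (fun n => x (k n))) /\
      subset (FP x) A /\
      (forall N, exists m, N <= m /\ forall n, k n <> m).
End Semi.

Definition block_seq (b : nat -> FinNE) : Prop :=
  forall i, fmax (b i) < fmin (b (Datatypes.S i)).

(* FP(b) in F: the unions  U_{i in a} b_i  (for a block sequence this union,
   in increasing order, is the concatenation of the b_i, i in a increasing). *)
Definition FU (b : nat -> FinNE) : FinNE -> Prop :=
  fun c => exists a : FinNE,
    proj1_sig c = concat (map (fun i => proj1_sig (b i)) (proj1_sig a)).

Definition ordered_union (q : (FinNE -> Prop) -> Prop) : Prop :=
  ultrafilter q /\
  forall A, q A -> exists b : nat -> FinNE, block_seq b /\ q (FU b) /\ subset (FU b) A.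

Definition sparseF (q : (FinNE -> Prop) -> Prop) : Prop :=
  forall A, q A ->
    exists (b : nat -> FinNE) (k : nat -> nat),
      block_seq b /\
      (forall n, k n < k (Datatypes.S n)) /\
      q (FU (fun n => b (k n))) /\
      subset (FU b) A /\
      (forall N, exists m, N <= m /\ forall n, k n <> m).

Definition mult_iso_OU {S : Type} (op : S -> S -> S) (p : (S -> Prop) -> Prop) : Prop :=
  exists x : nat -> S,
    (forall a b : FinNE, prodF op x a = prodF op x b -> a = b) /\
    ordered_union (fun B : FinNE -> Prop =>
      exists A : S -> Prop, p A /\ forall c, B c <-> A (prodF op x c)).

(* Main.v *)
Require Import Defs.
From Stdlib Require Import List Arith Lia Bool IndefiniteDescription FunctionalExtensionality.
Import ListNotations.

Lemma isFin_ne (l : list nat) : isFin l = true -> l <> [].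
Proof. destruct l; simpl; congruence. Qed.

Lemma isFin_incr l : isFin l = true -> incr l = true.
Proof. destruct l; simpl; auto; discriminate. Qed.

Lemma incr_isFin l : l <> [] -> incr l = true -> isFin l = true.
Proof. destruct l; simpl; auto; congruence. Qed.

Lemma incr_cons2 a c t : incr (a :: c :: t) = (a <? c) && incr (c :: t).
Proof. reflexivity. Qed.

Lemma last_cons2 (a c : nat) t : last (a :: c :: t) 0 = last (c :: t) 0.
Proof. reflexivity. Qed.

Lemma last_cons_ne (a : nat) l d : l <> [] -> last (a :: l) d = last l d.
Proof. destruct l; [congruence|reflexivity]. Qed.

Lemma last_app_ne (l1 l2 : list nat) d : l2 <> [] -> last (l1 ++ l2) d = last l2 d.
Proof.
  intros H; induction l1 as [|a t IH]; auto.
  change ((a :: t) ++ l2) with (a :: (t ++ l2)).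
  rewrite last_cons_ne; auto. destruct t; simpl; auto. discriminate.
Qed.

Lemma incr_hd_le_last l : incr l = true -> hd 0 l <= last l 0.
Proof.
  induction l as [|a t IH]; [simpl; auto|].
  destruct t as [|c t']; [simpl; auto|].
  rewrite incr_cons2. intros H; apply andb_prop in H as [H1 H2]. apply Nat.ltb_lt in H1.
  specialize (IH H2). rewrite last_cons2. simpl in IH. simpl. lia.
Qed.

Lemma incr_app l1 l2 : incr l1 = true -> incr l2 = true ->
  (l1 = [] \/ l2 = [] \/ last l1 0 < hd 0 l2) -> incr (l1 ++ l2) = true.
Proof.
  induction l1 as [|a t IH]; [simpl; auto|].
  intros H1 H2 H3.
  destruct t as [|c t'].
  - destruct l2 as [|d l2']; auto. simpl in H3.
    change ([a] ++ d :: l2') with (a :: d :: l2').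
    rewrite incr_cons2. apply andb_true_intro; split; auto. apply Nat.ltb_lt.
    destruct H3 as [H|[H|H]]; [discriminate|discriminate|exact H].
  - rewrite incr_cons2 in H1. apply andb_prop in H1 as [Ha Ht].
    change ((a :: c :: t') ++ l2) with (a :: c :: (t' ++ l2)).
    rewrite incr_cons2. apply andb_true_intro; split; auto.
    apply IH; auto. rewrite last_cons2 in H3. destruct H3 as [H|H]; [discriminate|auto].
Qed.

Fixpoint breaks (l : list nat) : nat :=
  match l with
  | a :: ((c :: _) as t) => (if Nat.eqb (S a) c then 0 else 1) + breaks t
  | _ => 0
  end.

Definition gapf (l1 l2 : list nat) : nat :=
  if Nat.eqb (S (last l1 0)) (hd 0 l2) then 0 else 1.

Lemma breaks_app l1 l2 : l1 <> [] -> l2 <> [] ->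
  breaks (l1 ++ l2) = breaks l1 + breaks l2 + gapf l1 l2.
Proof.
  induction l1 as [|a t IH]; [congruence|]. intros _ H2.
  destruct t as [|c t'].
  - destruct l2 as [|c l2']; [congruence|]. unfold gapf. simpl. lia.
  - change ((a :: c :: t') ++ l2) with (a :: c :: (t' ++ l2)).
    change (breaks (a :: c :: (t' ++ l2))) with
      ((if Nat.eqb (S a) c then 0 else 1) + breaks (c :: (t' ++ l2))).
    change (breaks (a :: c :: t')) with
      ((if Nat.eqb (S a) c then 0 else 1) + breaks (c :: t')).
    change (c :: t' ++ l2) with ((c :: t') ++ l2).
    rewrite IH; [|discriminate|auto].
    unfold gapf. rewrite last_cons2. lia.
Qed.

Definition chain (L : nat -> list nat) : Prop :=
  forall i, L i <> [] /\ incr (L i) = true /\ last (L i) 0 < hd 0 (L (S i)).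

Lemma chain_hd_le_last L : chain L -> forall i, hd 0 (L i) <= last (L i) 0.
Proof. intros HL i. apply incr_hd_le_last, (HL i). Qed.

Lemma chain_lt L : chain L -> forall i j, i < j -> last (L i) 0 < hd 0 (L j).
Proof.
  intros HL i j Hij. induction j as [|j IH]; [lia|].
  destruct (HL j) as [_ [_ Hj]].
  destruct (Nat.eq_dec i j) as [->|Hne]; auto.
  pose proof (chain_hd_le_last L HL j).
  specialize (IH ltac:(lia)). lia.
Qed.

Lemma chain_hd_inj L : chain L -> forall i j, hd 0 (L i) = hd 0 (L j) -> i = j.
Proof.
  intros HL i j H. destruct (Nat.lt_total i j) as [h|[h|h]]; auto.
  - pose proof (chain_lt L HL i j h). pose proof (chain_hd_le_last L HL i). lia.
  - pose proof (chain_lt L HL j i h). pose proof (chain_hd_le_last L HL j). lia.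
Qed.

Lemma hd_concat (L : nat -> list nat) (a : list nat) : (forall i, L i <> []) -> a <> [] ->
  hd 0 (concat (map L a)) = hd 0 (L (hd 0 a)).
Proof.
  intros HL Ha. destruct a as [|n a]; [congruence|]. simpl.
  destruct (L n) eqn:E; [exfalso; eapply HL; eauto|reflexivity].
Qed.

Lemma concat_ne (L : nat -> list nat) (a : list nat) : (forall i, L i <> []) -> a <> [] -> concat (map L a) <> [].
Proof.
  intros HL Ha. destruct a as [|n a]; [congruence|]. simpl.
  destruct (L n) eqn:E; [exfalso; eapply HL; eauto|discriminate].
Qed.

Lemma last_concat (L : nat -> list nat) (a : list nat) : (forall i, L i <> []) -> a <> [] ->
  last (concat (map L a)) 0 = last (L (last a 0)) 0.
Proof.
  intros HL. induction a as [|i t IH]; [congruence|]. intros _.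
  change (concat (map L (i :: t))) with (L i ++ concat (map L t)).
  destruct t as [|i' t'].
  - simpl. rewrite app_nil_r. reflexivity.
  - rewrite last_app_ne; [|apply concat_ne; auto; discriminate].
    rewrite IH; [|discriminate]. reflexivity.
Qed.

Lemma concat_map_inj L : chain L -> forall a1 a2,
  concat (map L a1) = concat (map L a2) -> a1 = a2.
Proof.
  intros HL a1; induction a1 as [|i t IH]; intros [|j t2] H; simpl in H; auto.
  - exfalso. destruct (HL j) as [Hne _]. destruct (L j); [congruence|discriminate].
  - exfalso. destruct (HL i) as [Hne _]. destruct (L i); [congruence|discriminate].
  - assert (i = j).
    { apply (chain_hd_inj L HL). destruct (HL i) as [Hi _]; destruct (HL j) as [Hj _].
      destruct (L i) eqn:Ei; [congruence|]. destruct (L j) eqn:Ej; [congruence|].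
      simpl in H. injection H; intros; simpl; congruence. }
    subst. f_equal. apply IH. apply app_inv_head in H. exact H.
Qed.

Lemma concat_incr L : chain L -> forall s i, incr (i :: s) = true ->
  incr (concat (map L (i :: s))) = true.
Proof.
  intros HL s. induction s as [|i' s IH]; intros i Hs.
  - simpl. rewrite app_nil_r. apply (HL i).
  - change (concat (map L (i :: i' :: s))) with (L i ++ concat (map L (i' :: s))).
    rewrite incr_cons2 in Hs. apply andb_prop in Hs as [Hii Hs]. apply Nat.ltb_lt in Hii.
    apply incr_app; [apply (HL i)| apply IH; exact Hs|].
    right; right. rewrite hd_concat; [|intro; apply HL|discriminate]. simpl.
    apply chain_lt; auto.
Qed.

Lemma concat_isFin L : chain L -> forall s, isFin s = true -> isFin (concat (map L s)) = true.
Proof.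
  intros HL s H. destruct s as [|i s]; [discriminate|].
  apply incr_isFin; [apply concat_ne; [intro; apply HL|discriminate]|].
  apply concat_incr; auto.
Qed.

Lemma block_chain b : block_seq b -> chain (fun i => proj1_sig (b i)).
Proof.
  intros Hb i. split; [apply isFin_ne, proj2_sig|split; [apply isFin_incr, proj2_sig|]].
  apply (Hb i).
Qed.

Lemma concat_concat (L : nat -> list nat) (I : nat -> list nat) s :
  concat (map (fun i => concat (map L (I i))) s) = concat (map L (concat (map I s))).
Proof.
  induction s as [|i s IH]; simpl; auto. rewrite map_app, concat_app, IH. reflexivity.
Qed.

Lemma FU_refine (b : nat -> FinNE) (x : nat -> FinNE) (I : nat -> list nat) :
  chain I -> (forall m, proj1_sig (x m) = concat (map (fun i => proj1_sig (b i)) (I m))) ->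
  subset (FU x) (FU b).
Proof.
  intros HI Hx c [a Ha].
  assert (Hf : isFin (concat (map I (proj1_sig a))) = true)
    by (apply concat_isFin; auto; apply proj2_sig).
  exists (exist (fun l => isFin l = true) _ Hf). simpl. rewrite Ha. rewrite <- concat_concat. f_equal.
  apply map_ext. auto.
Qed.

Lemma block_refine (b : nat -> FinNE) (x : nat -> FinNE) (I : nat -> list nat) :
  block_seq b -> chain I ->
  (forall m, proj1_sig (x m) = concat (map (fun i => proj1_sig (b i)) (I m))) ->
  block_seq x.
Proof.
  intros Hb HI Hx m. pose proof (block_chain b Hb) as HL.
  unfold fmax, fmin. rewrite !Hx.
  assert (Hne : forall i, proj1_sig (b i) <> []) by (intro; apply HL).
  rewrite last_concat, hd_concat; auto; try apply HI.
  apply (chain_lt _ HL). apply HI.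
Qed.
Section Prod.
Variables (T : Type) (op : T -> T -> T) (assoc : forall a b c, op a (op b c) = op (op a b) c).

Lemma fold_op (x : nat -> T) t : forall y z,
  fold_left (fun acc j => op acc (x j)) t (op y z) = op y (fold_left (fun acc j => op acc (x j)) t z).
Proof. induction t; simpl; intros; auto. rewrite <- assoc. apply IHt. Qed.

Lemma prodList_app x l1 l2 : l1 <> [] -> l2 <> [] ->
  prodList op x (l1 ++ l2) = op (prodList op x l1) (prodList op x l2).
Proof.
  destruct l1 as [|i t]; [congruence|]. destruct l2 as [|j t2]; [congruence|]. intros _ _.
  simpl. rewrite fold_left_app. simpl. rewrite fold_op. reflexivity.
Qed.

Lemma prodList_concat x (L : nat -> list nat) s : (forall i, L i <> []) -> s <> [] ->
  prodList op x (concat (map L s)) = prodList op (fun i => prodList op x (L i)) s.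
Proof.
  intros HL. induction s as [|i t IH]; [congruence|]. intros _.
  change (concat (map L (i :: t))) with (L i ++ concat (map L t)).
  destruct t as [|i' t'].
  - simpl. rewrite app_nil_r. reflexivity.
  - rewrite prodList_app; auto; [|apply concat_ne; auto; discriminate].
    rewrite IH; [|discriminate].
    change (i :: i' :: t') with ([i] ++ (i' :: t')).
    rewrite (prodList_app _ [i]); try discriminate. reflexivity.
Qed.
End Prod.

Lemma part2 (q : (FinNE -> Prop) -> Prop) : ordered_union q -> sparseF q.
Proof.
  intros [Uq OU] A HA.
  destruct Uq as [qT [qF [qmono [qint qult]]]].
  destruct (OU A HA) as [b [Hb [HFUb HbA]]].
  set (L := fun i => proj1_sig (b i)).
  assert (HL : chain L) by (apply block_chain; auto).
  assert (HLne : forall i, L i <> []) by (intro; apply HL).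
  set (De := fun (e : bool) (c : FinNE) => exists a : FinNE,
      proj1_sig c = concat (map L (proj1_sig a)) /\ Nat.odd (breaks (proj1_sig a)) = e).
  assert (Hex : exists e, q (De e)).
  { destruct (qult (De false)) as [H|H]; [exists false; auto|].
    exists true. apply (qmono _ _ (qint _ _ HFUb H)).
    intros c [[a Ha] Hn]. exists a. split; auto.
    destruct (Nat.odd (breaks (proj1_sig a))) eqn:E; auto.
    exfalso; apply Hn; exists a; auto. }
  destruct Hex as [e He].
  destruct (OU _ He) as [d [Hd [HFUd HdD]]].
  set (Ld := fun i => proj1_sig (d i)).
  assert (HLd : chain Ld) by (apply block_chain; auto).
  assert (Hsing : forall n, exists a : FinNE,
      proj1_sig (d n) = concat (map L (proj1_sig a)) /\ Nat.odd (breaks (proj1_sig a)) = e).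
  { intros n. apply HdD. exists (exist (fun l => isFin l = true) [n] eq_refl).
    simpl. rewrite app_nil_r. reflexivity. }
  set (an := fun n => proj1_sig (proj1_sig (constructive_indefinite_description _ (Hsing n)))).
  assert (Hal : forall n, proj1_sig (d n) = concat (map L (an n)) /\ Nat.odd (breaks (an n)) = e).
  { intro n. exact (proj2_sig (constructive_indefinite_description _ (Hsing n))). }
  assert (Hanfin : forall n, isFin (an n) = true).
  { intro n. exact (proj2_sig (proj1_sig (constructive_indefinite_description _ (Hsing n)))). }
  assert (Hanne : forall n, an n <> []) by (intro; apply isFin_ne; auto).
  assert (Haninc : forall n, incr (an n) = true) by (intro; apply isFin_incr; auto).
  assert (Hord : forall n, last (an n) 0 < hd 0 (an (S n))).
  { intro n. pose proof (Hd n) as Hdn. unfold fmax, fmin in Hdn.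
    rewrite (proj1 (Hal n)), (proj1 (Hal (S n))) in Hdn.
    rewrite last_concat, hd_concat in Hdn; auto.
    destruct (Nat.lt_ge_cases (last (an n) 0) (hd 0 (an (S n)))) as [H|H]; auto. exfalso.
    destruct (proj1 (Nat.lt_eq_cases _ _) H) as [H'|H'].
    - pose proof (chain_lt L HL _ _ H').
      pose proof (chain_hd_le_last L HL (hd 0 (an (S n)))).
      pose proof (chain_hd_le_last L HL (last (an n) 0)). lia.
    - rewrite H' in Hdn. pose proof (chain_hd_le_last L HL (last (an n) 0)). lia. }
  assert (Hpar : forall n m, n < m -> Nat.odd (gapf (an n) (an m)) = e).
  { intros n m Hnm.
    assert (Hfin : isFin [n; m] = true).
    { simpl. rewrite andb_true_r. apply Nat.ltb_lt; auto. }
    assert (Hc : De e (exist (fun l => isFin l = true) _ (concat_isFin Ld HLd [n; m] Hfin))).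
    { apply HdD. exists (exist (fun l => isFin l = true) _ Hfin). reflexivity. }
    destruct Hc as [a [Ha Hpa]]. simpl in Ha.
    rewrite app_nil_r in Ha. unfold Ld in Ha.
    rewrite (proj1 (Hal n)), (proj1 (Hal m)), <- concat_app, <- map_app in Ha.
    apply (concat_map_inj L HL) in Ha. rewrite <- Ha, breaks_app in Hpa; auto.
    rewrite !Nat.odd_add, (proj2 (Hal n)), (proj2 (Hal m)) in Hpa.
    destruct e, (Nat.odd (gapf (an n) (an m))); simpl in *; congruence. }
  assert (He1 : e = true).
  { rewrite <- (Hpar 0 2 ltac:(lia)). unfold gapf.
    pose proof (Hord 0). pose proof (Hord 1). pose proof (incr_hd_le_last _ (Haninc 1)).
    destruct (Nat.eqb_spec (S (last (an 0) 0)) (hd 0 (an 2))); [lia|reflexivity]. }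
  subst e.
  assert (Hgap : forall n, S (last (an n) 0) < hd 0 (an (S n))).
  { intro n. pose proof (Hpar n (S n) ltac:(lia)) as H. pose proof (Hord n). unfold gapf in H.
    destruct (Nat.eqb_spec (S (last (an n) 0)) (hd 0 (an (S n)))); [discriminate|lia]. }
  set (I := fun m => if Nat.even m then an (Nat.div2 m) else [S (last (an (Nat.div2 m)) 0)]).
  set (x := fun m => if Nat.even m then d (Nat.div2 m) else b (S (last (an (Nat.div2 m)) 0))).
  assert (HIe : forall n, I (2 * n) = an n).
  { intro n. unfold I. rewrite Nat.even_even, Nat.div2_double. reflexivity. }
  assert (HIo : forall n, I (2 * n + 1) = [S (last (an n) 0)]).
  { intro n. unfold I. rewrite Nat.even_odd, Nat.div2_odd'. reflexivity. }
  assert (Hxe : forall n, x (2 * n) = d n).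
  { intro n. unfold x. rewrite Nat.even_even, Nat.div2_double. reflexivity. }
  assert (Hxo : forall n, x (2 * n + 1) = b (S (last (an n) 0))).
  { intro n. unfold x. rewrite Nat.even_odd, Nat.div2_odd'. reflexivity. }
  assert (HI : chain I).
  { intro m. destruct (Nat.Even_or_Odd m) as [[n ->]|[n ->]].
    - rewrite HIe. replace (S (2 * n)) with (2 * n + 1) by lia. rewrite HIo. simpl.
      split; [auto|split; [auto|]]. lia.
    - rewrite HIo. replace (S (2 * n + 1)) with (2 * S n) by lia. rewrite HIe. simpl.
      split; [discriminate|]. split; [reflexivity|]. apply Hgap. }
  assert (Hrel : forall m, proj1_sig (x m) = concat (map (fun i => proj1_sig (b i)) (I m))).
  { intro m. destruct (Nat.Even_or_Odd m) as [[n ->]|[n ->]].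
    - rewrite Hxe, HIe. apply Hal.
    - rewrite Hxo, HIo. simpl. rewrite app_nil_r. reflexivity. }
  exists x, (fun n => 2 * n). split; [|split; [|split; [|split]]].
  - apply (block_refine b x I); auto.
  - intro n; lia.
  - replace (fun n => x (2 * n)) with d; auto.
    apply functional_extensionality. intro n. rewrite Hxe. reflexivity.
  - intros c Hc. apply HbA. apply (FU_refine b x I); auto.
  - intro N. exists (2 * N + 1). split; [lia|]. intro n; lia.
Qed.

Lemma part1 (T : Type) (op : T -> T -> T)
  (assoc : forall a b c, op a (op b c) = op (op a b) c) (p : (T -> Prop) -> Prop) :
  strongly_productive op p -> mult_iso_OU op p -> sparse op p.
Proof.
  intros [Up _] [x [_ HOU]] A HA.
  destruct Up as [pT [pF [pmono [pint pult]]]].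
  pose proof (part2 _ HOU) as Hsp.
  destruct (Hsp (fun c => A (prodF op x c))) as [b [k [Hb [Hk [HqFU [HbA Hcof]]]]]].
  { exists A. split; auto. tauto. }
  pose proof (block_chain b Hb) as HL.
  assert (Himg : p (FP op x)).
  { destruct (pult (FP op x)) as [H|H]; auto. exfalso.
    destruct HOU as [[_ [qF _]] _]. apply qF. exists (fun s => ~ FP op x s). split; auto.
    intros c; split; [tauto|]. intros Hn; apply Hn. exists c; reflexivity. }
  assert (Hprod : forall (bb : nat -> FinNE) (a : list nat), a <> [] ->
     prodList op x (concat (map (fun i => proj1_sig (bb i)) a)) =
     prodList op (fun n => prodF op x (bb n)) a).
  { intros. apply prodList_concat; auto. intro i; apply isFin_ne, proj2_sig. }
  exists (fun n => prodF op x (b n)), k. split; [auto|]. split; [|split; [|auto]].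
  - destruct HqFU as [A' [HA' Hiff]].
    apply (pmono _ _ (pint _ _ HA' Himg)).
    intros s [HAs [c ->]]. apply Hiff in HAs. destruct HAs as [a Ha].
    exists a. unfold prodF at 1. rewrite Ha.
    exact (Hprod (fun n => b (k n)) _ (isFin_ne _ (proj2_sig a))).
  - intros s [a ->].
    assert (Hf : isFin (concat (map (fun i => proj1_sig (b i)) (proj1_sig a))) = true)
      by (apply concat_isFin; auto; apply proj2_sig).
    pose proof (HbA (exist (fun l => isFin l = true) _ Hf) (ex_intro _ a eq_refl)) as H.
    simpl in H. unfold prodF in H. simpl in H. rewrite Hprod in H; auto.
    apply isFin_ne, proj2_sig.
Qed.

Theorem mainTheorem15 :
  (forall (S : Type) (op : S -> S -> S)
     (assoc : forall a b c, op a (op b c) = op (op a b) c)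
     (p : (S -> Prop) -> Prop),
     strongly_productive op p -> mult_iso_OU op p -> sparse op p)
  /\
  (forall q : (FinNE -> Prop) -> Prop, ordered_union q -> sparseF q).
Proof.
  split.
  - intros S op assoc p. apply part1; auto.
  - exact part2.
Qed.
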